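(* For a read-once Boolean function $f$ the following are equivalent: (1) $f$ is linear read-once; (2) $f$ is a Chow function; (3) no restriction of $f$ equals, up to renaming of variables, $g_1(x,y,z,u)=(x\vee y)\wedge(z\vee u)$, $g_2(x,y,z,u)=(x\wedge y)\vee(z\wedge u)$, or any function obtained from $g_1$ or $g_2$ by negating some of its variables.
   Context: Read-once: representable by a formula over $\wedge,\vee,\neg$ in which every variable appears at most once. Linear read-once (lro): constant, or representable by a nested formula, where literals $x,\overline{x}$ are nested and $x\vee t$, $x\wedge t$, $\overline{x}\vee t$, $\overline{x}\wedge t$ are nested whenever $t$ is nested and contains neither $x$ nor $\overline{x}$. Chow parameters of $f(x_1,\ldots,x_n)$: $(w_1(f),\ldots,w_n(f),w(f))$, with $w(f)$ the number of true points and $w_i(f)$ the number of true points with $x_i=1$; $f$ is Chow if no other function of the same variables has the same Chow parameters. A restriction of $f$ is obtained by fixing some variables to constants. *)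

(* Defs.v *)
From mathcomp Require Import all_boot.
Set Implicit Arguments. Unset Strict Implicit. Unset Printing Implicit Defensive.

Definition bvec (n : nat) := {ffun 'I_n -> bool}.
Definition boolfun (n : nat) := {ffun bvec n -> bool}.

Inductive form (n : nat) : Type :=
| FConst of bool
| FVar of 'I_n
| FNeg of form n
| FAnd of form n & form n
| FOr of form n & form n.

Fixpoint feval n (phi : form n) (x : bvec n) : bool :=
  match phi with
  | FConst b => b
  | FVar i => x i
  | FNeg p => ~~ feval p x
  | FAnd p q => feval p x && feval q x
  | FOr p q => feval p x || feval q x
  end.

Fixpoint fvars n (phi : form n) : seq 'I_n :=
  match phi with
  | FConst _ => [::]
  | FVar i => [:: i]
  | FNeg p => fvars p
  | FAnd p q => fvars p ++ fvars q
  | FOr p q => fvars p ++ fvars q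
  end.

Definition represents n (phi : form n) (f : boolfun n) : Prop :=
  forall x, f x = feval phi x.

Definition read_once n (f : boolfun n) : Prop :=
  exists phi : form n, uniq (fvars phi) /\ represents phi f.

Inductive nested n : form n -> Prop :=
| nest_pos i : nested (FVar i)
| nest_neg i : nested (FNeg (FVar i))
| nest_or_pos i t : nested t -> i \notin fvars t -> nested (FOr (FVar i) t)
| nest_and_pos i t : nested t -> i \notin fvars t -> nested (FAnd (FVar i) t)
| nest_or_neg i t : nested t -> i \notin fvars t -> nested (FOr (FNeg (FVar i)) t)
| nest_and_neg i t : nested t -> i \notin fvars t -> nested (FAnd (FNeg (FVar i)) t).

Definition is_const n (f : boolfun n) : Prop := exists b, forall x, f x = b.

Definition linear_read_once n (f : boolfun n) : Prop :=
  is_const f \/ exists t : form n, nested t /\ represents t f.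

Definition chow_w n (f : boolfun n) : nat := #|[set x | f x]|.
Definition chow_wi n (f : boolfun n) (i : 'I_n) : nat := #|[set x | f x && x i]|.

Definition chow n (f : boolfun n) : Prop :=
  forall g : boolfun n,
    (forall i, chow_wi g i = chow_wi f i) -> chow_w g = chow_w f -> g = f.

(* The point of {0,1}^n obtained by putting y_k into variable sigma k and
   the constant c j into every other variable j. *)
Definition plug n (sigma : 'I_4 -> 'I_n) (c : bvec n) (y : bvec 4) : bvec n :=
  [ffun j => match [pick k : 'I_4 | sigma k == j] with
             | Some k => y k
             | None => c j
             end].

Definition g1 (y : bvec 4) : bool :=
  (y (inord 0) || y (inord 1)) && (y (inord 2) || y (inord 3)).
Definition g2 (y : bvec 4) : bool :=
  (y (inord 0) && y (inord 1)) || (y (inord 2) && y (inord 3)).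

Definition negvars (s y : bvec 4) : bvec 4 := [ffun k => y k (+) s k].

Definition has_restriction_to n (f : boolfun n) (g : bvec 4 -> bool) : Prop :=
  exists (sigma : 'I_4 -> 'I_n) (c : bvec n) (s : bvec 4),
    injective sigma /\ forall y : bvec 4, f (plug sigma c y) = g (negvars s y).

Definition no_forbidden_restriction n (f : boolfun n) : Prop :=
  ~ has_restriction_to f g1 /\ ~ has_restriction_to f g2.

(* Main.v *)
Require Import Defs.
From mathcomp Require Import all_boot.
Set Implicit Arguments. Unset Strict Implicit. Unset Printing Implicit Defensive.

Section C.
Variable n : nat.
Implicit Types (h : bvec n -> bool) (V : seq 'I_n) (t : form n).

Definition dep h V := forall x x' : bvec n, (forall k, k \in V -> x k = x' k) -> h x = h x'.
Definition disj V1 V2 := forall k, k \in V1 -> k \notin V2.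
Definition upd (c : bvec n) (i : 'I_n) (v : bool) : bvec n :=
  [ffun k => if k == i then v else c k].

Lemma feval_dep t : dep (feval t) (fvars t).
Proof.
elim: t => [b|i|p IH|p IHp q IHq|p IHp q IHq] x x' h //=.
- by apply: h; rewrite inE.
- by rewrite (IH x x').
- rewrite (IHp x x') ?(IHq x x') // => k kq; apply: h; by rewrite mem_cat kq ?orbT.
- rewrite (IHp x x') ?(IHq x x') // => k kq; apply: h; by rewrite mem_cat kq ?orbT.
Qed.

Lemma dep_upd h V x i v : dep h V -> i \notin V -> h (upd x i v) = h x.
Proof.
move=> d iV; apply: d => k kV; rewrite ffunE; case: eqP => // eki.
by subst k; rewrite kV in iV.
Qed.

Lemma upd_com c i j a b : i != j -> upd (upd c i a) j b = upd (upd c j b) i a.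
Proof.
move=> ij; apply/ffunP => k; rewrite !ffunE.
case: (eqVneq k j) => [->|//]; by rewrite eq_sym (negbTE ij).
Qed.

Lemma feval_upd t x i v : i \notin fvars t -> feval t (upd x i v) = feval t x.
Proof. move=> it; exact: (dep_upd x v (@feval_dep t) it). Qed.

Lemma dep_mono h V W : dep h V -> {subset V <= W} -> dep h W.
Proof. by move=> d s x x' e; apply: d => k kV; apply: e; apply: s. Qed.

Lemma lit_restr t : nested t -> exists j b c, j \in fvars t /\ forall v, feval t (upd c j v) = v (+) b.
Proof.
elim=> {t}.
- move=> i; exists i, false, [ffun _ => false]; split; first by rewrite inE.
  by move=> v; rewrite /= ffunE eqxx addbF.
- move=> i; exists i, true, [ffun _ => false]; split; first by rewrite inE.
  by move=> v; rewrite /= ffunE eqxx addbT.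
- move=> i t _ [j [b [c [jt hj]]]] it; exists j, b, (upd c i false); split.
    by rewrite /= inE jt orbT.
  have ij : i != j by apply: contraNneq it => ->.
  move=> v; rewrite /= upd_com // feval_upd // hj.
  by rewrite !ffunE eqxx.
- move=> i t _ [j [b [c [jt hj]]]] it; exists j, b, (upd c i true); split.
    by rewrite /= inE jt orbT.
  have ij : i != j by apply: contraNneq it => ->.
  move=> v; rewrite /= upd_com // feval_upd // hj.
  by rewrite !ffunE eqxx.
- move=> i t _ [j [b [c [jt hj]]]] it; exists j, b, (upd c i true); split.
    by rewrite /= inE jt orbT.
  have ij : i != j by apply: contraNneq it => ->.
  move=> v; rewrite /= upd_com // feval_upd // hj.
  by rewrite !ffunE eqxx.
- move=> i t _ [j [b [c [jt hj]]]] it; exists j, b, (upd c i false); split.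
    by rewrite /= inE jt orbT.
  have ij : i != j by apply: contraNneq it => ->.
  move=> v; rewrite /= upd_com // feval_upd // hj.
  by rewrite !ffunE eqxx.
Qed.


Lemma nested_neg t : nested t -> exists t', nested t' /\ fvars t' = fvars t /\ forall x, feval t' x = ~~ feval t x.
Proof.
elim=> {t}.
- by move=> i; exists (FNeg (FVar i)); do !split; constructor.
- by move=> i; exists (FVar i); do !split; [constructor | move=> x /=; rewrite negbK].
- move=> i t _ [t' [nt [e ht]]] it; exists (FAnd (FNeg (FVar i)) t'); do !split.
  + by constructor; rewrite ?e.
  + by rewrite /= e.
  + by move=> x /=; rewrite ht negb_or.
- move=> i t _ [t' [nt [e ht]]] it; exists (FOr (FNeg (FVar i)) t'); do !split.
  + by constructor; rewrite ?e.
  + by rewrite /= e.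
  + by move=> x /=; rewrite ht negb_and.
- move=> i t _ [t' [nt [e ht]]] it; exists (FAnd (FVar i) t'); do !split.
  + by constructor; rewrite ?e.
  + by rewrite /= e.
  + by move=> x /=; rewrite ht negb_or negbK.
- move=> i t _ [t' [nt [e ht]]] it; exists (FOr (FVar i) t'); do !split.
  + by constructor; rewrite ?e.
  + by rewrite /= e.
  + by move=> x /=; rewrite ht negb_and negbK.
Qed.

Definition OR2 h V := exists i j c a b, [/\ i != j, i \in V, j \in V &
  forall u v, h (upd (upd c i u) j v) = (u (+) a) || (v (+) b)].

Lemma term_or_OR2 t1 : nested t1 ->
  (forall t2, nested t2 -> disj (fvars t1) (fvars t2) ->
     exists t, [/\ nested t, {subset fvars t <= fvars t1 ++ fvars t2} &
       forall x, feval t x = feval t1 x && feval t2 x])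
  \/ OR2 (feval t1) (fvars t1).
Proof.
elim=> {t1}.
- move=> i; left=> t2 n2 d; exists (FAnd (FVar i) t2); split => //.
  + by apply: nest_and_pos => //; apply: d; rewrite inE.
- move=> i; left=> t2 n2 d; exists (FAnd (FNeg (FVar i)) t2); split => //.
  + by apply: nest_and_neg => //; apply: d; rewrite inE.
- move=> i t nt _ it; right.
  have [j [b [c [jt hj]]]] := lit_restr nt.
  have ij : i != j by apply: contraNneq it => ->.
  exists i, j, c, false, b; split; [exact: ij | by rewrite /= inE eqxx | by rewrite /= inE jt orbT | ].
  by move=> u v; rewrite /= upd_com // feval_upd // hj !ffunE eqxx addbF.
- move=> i t nt [IH|[i1 [j1 [c [a [b [ij i1t j1t hc]]]]]]] it.
  + left=> t2 n2 d.
    have [|t' [nt' s' e']] := IH t2 n2.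
      by move=> k kt; apply: d; rewrite /= inE kt orbT.
    exists (FAnd (FVar i) t'); split.
    * apply: nest_and_pos => //; apply/negP => /s'; rewrite mem_cat (negbTE it) /=.
      by move=> it2; have := d i; rewrite /= inE eqxx it2 => /(_ isT).
    * move=> k; rewrite /= inE => /orP[/eqP->|/s' kk]; first exact: mem_head.
      by rewrite inE kk orbT.
    * by move=> x; rewrite /= e' andbA.
  + right; exists i1, j1, (upd c i true), a, b.
    split; [exact: ij | by rewrite /= inE i1t orbT | by rewrite /= inE j1t orbT | ].
    have ii1 : i != i1 by apply: contraNneq it => ->.
    have ij1 : i != j1 by apply: contraNneq it => ->.
    move=> u v; rewrite /= [upd (upd c i _) i1 u]upd_com // upd_com // feval_upd // hc.
    by rewrite !ffunE eqxx.
- move=> i t nt _ it; right.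
  have [j [b [c [jt hj]]]] := lit_restr nt.
  have ij : i != j by apply: contraNneq it => ->.
  exists i, j, c, true, b; split; [exact: ij | by rewrite /= inE eqxx | by rewrite /= inE jt orbT | ].
  by move=> u v; rewrite /= upd_com // feval_upd // hj !ffunE eqxx addbT.
- move=> i t nt [IH|[i1 [j1 [c [a [b [ij i1t j1t hc]]]]]]] it.
  + left=> t2 n2 d.
    have [|t' [nt' s' e']] := IH t2 n2.
      by move=> k kt; apply: d; rewrite /= inE kt orbT.
    exists (FAnd (FNeg (FVar i)) t'); split.
    * apply: nest_and_neg => //; apply/negP => /s'; rewrite mem_cat (negbTE it) /=.
      by move=> it2; have := d i; rewrite /= inE eqxx it2 => /(_ isT).
    * move=> k; rewrite /= inE => /orP[/eqP->|/s' kk]; first exact: mem_head.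
      by rewrite inE kk orbT.
    * by move=> x; rewrite /= e' andbA.
  + right; exists i1, j1, (upd c i false), a, b.
    split; [exact: ij | by rewrite /= inE i1t orbT | by rewrite /= inE j1t orbT | ].
    have ii1 : i != i1 by apply: contraNneq it => ->.
    have ij1 : i != j1 by apply: contraNneq it => ->.
    move=> u v; rewrite /= [upd (upd c i _) i1 u]upd_com // upd_com // feval_upd // hc.
    by rewrite !ffunE eqxx.
Qed.


Lemma plug_in (sigma : 'I_4 -> 'I_n) (c : bvec n) y k : injective sigma -> plug sigma c y (sigma k) = y k.
Proof.
move=> inj; rewrite /plug ffunE; case: pickP => [k' /eqP/inj -> // | /(_ k)].
by rewrite eqxx.
Qed.

Lemma plug_out (sigma : 'I_4 -> 'I_n) (c : bvec n) y j : (forall k, sigma k != j) -> plug sigma c y j = c j.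
Proof. by move=> H; rewrite /plug ffunE; case: pickP => [k' e|//]; rewrite (negbTE (H k')) in e. Qed.

Lemma plug_c (sigma : 'I_4 -> 'I_n) (c c' : bvec n) y j : c j = c' j -> plug sigma c y j = plug sigma c' y j.
Proof. by move=> e; rewrite /plug !ffunE; case: pickP. Qed.

Definition ForbG (g : bvec 4 -> bool) h V := exists sigma c s, [/\ injective sigma,
  forall k, sigma k \in V & forall y, h (plug sigma c y) = g (negvars s y)].
Definition Forb h V := ForbG g1 h V \/ ForbG g2 h V.

Lemma ForbG_mono g h V W : ForbG g h V -> {subset V <= W} -> ForbG g h W.
Proof. by move=> [sg [c [s [i r e]]]] sub; exists sg, c, s; split => // k; apply: sub. Qed.

Lemma ForbG_ext g h h' V : ForbG g h V -> (forall x, h x = h' x) -> ForbG g h' V.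
Proof. by move=> [sg [c [s [i r e]]]] hh; exists sg, c, s; split => // y; rewrite -hh. Qed.

Lemma ForbG_and g h1 h2 V1 V2 p : ForbG g h1 V1 -> dep h1 V1 -> dep h2 V2 -> disj V1 V2 ->
  h2 p -> ForbG g (fun x => h1 x && h2 x) (V1 ++ V2).
Proof.
move=> [sg [c [s [i r e]]]] d1 d2 dj hp.
exists sg, [ffun k => if k \in V2 then p k else c k], s; split => //.
  by move=> k; rewrite mem_cat r.
move=> y; rewrite -e -[RHS]andbT; congr (_ && _).
  apply: d1 => k kV; apply: plug_c; rewrite ffunE.
  by have := dj k kV; case: (k \in V2).
rewrite -hp; apply: d2 => k kV; rewrite plug_out ?ffunE ?kV //.
move=> m; apply/eqP => em; have := dj _ (r m); by rewrite em kV.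
Qed.

Lemma ForbG_true g h V : ForbG g h V -> g [ffun => true] -> exists p, h p.
Proof.
move=> [sg [c [s [i r e]]]] gt; exists (plug sg c (negvars s [ffun => true])).
rewrite e; have -> : negvars s (negvars s [ffun => true]) = [ffun => true].
  by apply/ffunP => k; rewrite !ffunE addbK.
by [].
Qed.

Lemma Forb_neg h V : Forb h V -> Forb (fun x => ~~ h x) V.
Proof.
case=> [[sg [c [s [i r e]]]]|[sg [c [s [i r e]]]]]; [right|left];
  exists sg, c, [ffun k => ~~ s k]; split => // y; rewrite e /g1 /g2 /negvars !ffunE;
  rewrite !addbN; by case: (_ (+) _); case: (_ (+) _); case: (_ (+) _); case: (_ (+) _).
Qed.


Lemma OR2_eval h V (i j : 'I_n) c a b (x : bvec n) u v : dep h V ->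
  (forall u v, h (upd (upd c i u) j v) = (u (+) a) || (v (+) b)) ->
  x i = u -> x j = v -> (forall k, k \in V -> k != i -> k != j -> x k = c k) ->
  h x = (u (+) a) || (v (+) b).
Proof.
move=> d hc xi xj xo; rewrite -hc; apply: d => k kV; rewrite !ffunE.
case: (eqVneq k j) => [->//|kj]; case: (eqVneq k i) => [->//|ki].
exact: xo.
Qed.

Lemma OR2_Forb h1 h2 V1 V2 : OR2 h1 V1 -> OR2 h2 V2 -> dep h1 V1 -> dep h2 V2 -> disj V1 V2 ->
  ForbG g1 (fun x => h1 x && h2 x) (V1 ++ V2).
Proof.
move=> [i1 [j1 [c1 [a1 [b1 [ij1 i1V j1V hc1]]]]]] [i2 [j2 [c2 [a2 [b2 [ij2 i2V j2V hc2]]]]]] d1 d2 dj.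
have i1n := dj _ i1V; have j1n := dj _ j1V.
have i1i2 : i1 != i2 by apply: contraNneq i1n => ->.
have i1j2 : i1 != j2 by apply: contraNneq i1n => ->.
have j1i2 : j1 != i2 by apply: contraNneq j1n => ->.
have j1j2 : j1 != j2 by apply: contraNneq j1n => ->.
pose l := [:: i1; j1; i2; j2].
have ul : uniq l by rewrite /l /= !inE !negb_or ij1 i1i2 i1j2 j1i2 j1j2 ij2.
pose sg := fun k : 'I_4 => nth i1 l k.
have inj : injective sg.
  move=> k k' /eqP; rewrite /sg nth_uniq ?size_tuple //= => /eqP; exact: ord_inj.
have s0 : sg (inord 0) = i1 by rewrite /sg inordK.
have s1 : sg (inord 1) = j1 by rewrite /sg inordK.
have s2 : sg (inord 2) = i2 by rewrite /sg inordK.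
have s3 : sg (inord 3) = j2 by rewrite /sg inordK.
have sl : forall m, sg m \in l by move=> m; apply: mem_nth.
exists sg, [ffun k => if k \in V1 then c1 k else c2 k],
  [ffun k : 'I_4 => nth false [:: a1; b1; a2; b2] k]; split => //.
  move=> m; have := sl m; rewrite /l !inE mem_cat.
  by case/or4P => /eqP->; rewrite ?i1V ?j1V ?i2V ?j2V ?orbT.
move=> y; set cc := [ffun k => if k \in V1 then c1 k else c2 k].
have p0 : plug sg cc y i1 = y (inord 0) by rewrite -{1}s0 plug_in.
have p1 : plug sg cc y j1 = y (inord 1) by rewrite -{1}s1 plug_in.
have p2 : plug sg cc y i2 = y (inord 2) by rewrite -{1}s2 plug_in.
have p3 : plug sg cc y j2 = y (inord 3) by rewrite -{1}s3 plug_in.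
rewrite /g1 /negvars !ffunE !inordK //=.
congr (_ && _).
- apply: (OR2_eval d1 hc1) => //.
  move=> k kV ki kj; rewrite plug_out ?ffunE ?kV //.
  move=> m; have := sl m; rewrite /l !inE; apply: contraL => /eqP->.
  have kn := dj _ kV.
  rewrite (negbTE ki) (negbTE kj) /=; apply/norP; split.
    by apply: contraNneq kn => ->.
  by apply: contraNneq kn => ->.
- apply: (OR2_eval d2 hc2) => //.
  move=> k kV ki kj; rewrite plug_out ?ffunE.
    by case: ifP => // kV1; have := dj _ kV1; rewrite kV.
  move=> m; have := sl m; rewrite /l !inE; apply: contraL => /eqP->.
  rewrite (negbTE ki) (negbTE kj) /= !orbF; apply/norP; split.
    by apply: contraTneq kV => ->.
  by apply: contraTneq kV => ->.
Qed.


Definition Inv h V := (exists b, forall x, h x = b) \/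
  (exists t, [/\ nested t, {subset fvars t <= V} & forall x, h x = feval t x]) \/ Forb h V.

Lemma Inv_ext h h' V : Inv h V -> (forall x, h x = h' x) -> Inv h' V.
Proof.
move=> [[b hb]|[[t [nt st ht]]|[F|F]]] e.
- by left; exists b => x; rewrite -e.
- by right; left; exists t; split => // x; rewrite -e.
- by right; right; left; apply: ForbG_ext F e.
- by right; right; right; apply: ForbG_ext F e.
Qed.

Lemma Inv_mono h V W : Inv h V -> {subset V <= W} -> Inv h W.
Proof.
move=> [[b hb]|[[t [nt st ht]]|[F|F]]] sub.
- by left; exists b.
- by right; left; exists t; split => // k /st; apply: sub.
- by right; right; left; apply: ForbG_mono F sub.
- by right; right; right; apply: ForbG_mono F sub.
Qed.

Lemma Inv_neg h V : Inv h V -> Inv (fun x => ~~ h x) V.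
Proof.
move=> [[b hb]|[[t [nt st ht]]|F]].
- by left; exists (~~ b) => x; rewrite hb.
- have [t' [nt' [e ht']]] := nested_neg nt.
  by right; left; exists t'; split => // [k|x]; rewrite ?e ?ht ?ht' //; apply: st.
- by right; right; apply: Forb_neg.
Qed.

Lemma Inv_true h V : Inv h V -> (exists p, h p) \/ (forall x, h x = false).
Proof.
move=> [[b hb]|[[t [nt st ht]]|[F|F]]].
- by case: b hb => hb; [left; exists [ffun => true]| right].
- left; have [j [b [c [_ hj]]]] := lit_restr nt.
  by exists (upd c j (~~ b)); rewrite ht hj addNb addbb.
- by left; apply: ForbG_true F _; rewrite /g1 !ffunE.
- by left; apply: ForbG_true F _; rewrite /g2 !ffunE.
Qed.

Lemma disj_sym V1 V2 : disj V1 V2 -> disj V2 V1.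
Proof. by move=> d k k2; apply: contraL k2; apply: d. Qed.

Lemma disj_sub V1 V2 W1 W2 : disj V1 V2 -> {subset W1 <= V1} -> {subset W2 <= V2} -> disj W1 W2.
Proof. by move=> d s1 s2 k /s1 /d; apply: contra; apply: s2. Qed.

Lemma subcat V1 V2 : {subset V2 ++ V1 <= V1 ++ V2}.
Proof. by move=> k; rewrite !mem_cat orbC. Qed.

Lemma Forb_and_half h1 h2 V1 V2 : Forb h1 V1 -> dep h1 V1 -> dep h2 V2 -> disj V1 V2 ->
  Inv h2 V2 -> Inv (fun x => h1 x && h2 x) (V1 ++ V2).
Proof.
move=> F d1 d2 dj I2.
case: (Inv_true I2) => [[p hp]|h2f].
- right; right; case: F => F; [left|right]; exact: ForbG_and F d1 d2 dj hp.
- by left; exists false => x; rewrite h2f andbF.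
Qed.

Lemma Inv_and h1 h2 V1 V2 : Inv h1 V1 -> Inv h2 V2 -> dep h1 V1 -> dep h2 V2 -> disj V1 V2 ->
  Inv (fun x => h1 x && h2 x) (V1 ++ V2).
Proof.
move=> I1 I2 d1 d2 dj.
case: I1 => [[b hb]|[N1|F1]]; last exact: Forb_and_half.
  case: b hb => hb.
    by apply: Inv_mono (Inv_ext I2 _) _ => [x|k kV]; rewrite ?hb // mem_cat kV orbT.
  by left; exists false => x; rewrite hb.
case: I2 => [[b hb]|[N2|F2]].
- case: b hb => hb.
    by apply: Inv_mono (Inv_ext (or_intror (or_introl N1)) _) _ => [x|k kV]; rewrite ?hb ?andbT // mem_cat kV.
  by left; exists false => x; rewrite hb andbF.
- move: N1 N2 => [t1 [n1 s1 e1]] [t2 [n2 s2 e2]].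
  have dt : disj (fvars t1) (fvars t2) by apply: disj_sub dj s1 s2.
  case: (term_or_OR2 n1) => [T1|O1].
    have [t [nt st et]] := T1 t2 n2 dt.
    right; left; exists t; split => //.
      move=> k /st; rewrite !mem_cat => /orP[/s1 ->//|/s2 ->]; by rewrite orbT.
    by move=> x; rewrite et e1 e2.
  case: (term_or_OR2 n2) => [T2|O2].
    have [t [nt st et]] := T2 t1 n1 (disj_sym dt).
    right; left; exists t; split => //.
      move=> k /st; rewrite !mem_cat => /orP[/s2 ->|/s1 ->//]; by rewrite orbT.
    by move=> x; rewrite et e1 e2 andbC.
  right; right; left.
  apply: (@ForbG_mono _ _ (fvars t1 ++ fvars t2)); last first.
    move=> k; rewrite !mem_cat => /orP[/s1 ->//|/s2 ->]; by rewrite orbT.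
  apply: ForbG_ext (OR2_Forb O1 O2 (@feval_dep t1) (@feval_dep t2) dt) _.
  by move=> x; rewrite e1 e2.
- apply: Inv_mono (Inv_ext (Forb_and_half F2 d2 d1 (disj_sym dj) (or_intror (or_introl N1))) _) _.
    by move=> x; rewrite andbC.
  exact: subcat.
Qed.

Lemma dep_neg h V : dep h V -> dep (fun x => ~~ h x) V.
Proof. by move=> d x x' e; rewrite (d x x'). Qed.

Lemma main_inv t : uniq (fvars t) -> Inv (feval t) (fvars t).
Proof.
elim: t => [b|i|p IH|p IHp q IHq|p IHp q IHq] /= u.
- by left; exists b.
- right; left; exists (FVar i); split => //; constructor.
- by apply: Inv_neg; apply: IH.
- move: u; rewrite cat_uniq => /and3P[up hq uq].
  apply: Inv_and; [exact: IHp | exact: IHq | exact: (@feval_dep p) | exact: (@feval_dep q) | ].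
  by move=> k kp; apply/negP => kq; case/hasP: hq; exists k.
- move: u; rewrite cat_uniq => /and3P[up hq uq].
  apply: Inv_ext (Inv_neg (Inv_and (Inv_neg (IHp up)) (Inv_neg (IHq uq)) _ _ _)) _.
  + exact: dep_neg (@feval_dep p).
  + exact: dep_neg (@feval_dep q).
  + by move=> k kp; apply/negP => kq; case/hasP: hq; exists k.
  + by move=> x; rewrite negb_and !negbK.
Qed.

End C.

Lemma NF_lro n (f : boolfun n) : read_once f -> no_forbidden_restriction f -> linear_read_once f.
Proof.
move=> [phi [u rf]] [N1 N2].
case: (main_inv u) => [[b hb]|[[t [nt _ ht]]|[[sg [c [s [i _ e]]]]|[sg [c [s [i _ e]]]]]]].
- by left; exists b => x; rewrite rf hb.
- by right; exists t; split => // x; rewrite rf ht.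
- by case: N1; exists sg, c, s; split => // y; rewrite rf e.
- by case: N2; exists sg, c, s; split => // y; rewrite rf e.
Qed.


Lemma cardS_sum (T : finType) (P : pred T) : #|[set x | P x]| = \sum_x (P x : nat).
Proof.
rewrite -sum1dep_card big_mkcond /=; apply: eq_bigr => x _; by case: (P x).
Qed.

Lemma sum_pt (T : finType) (a : T) (W : T -> nat) :
  \sum_x (x == a) * W x = W a.
Proof.
rewrite (bigD1 a) //= eqxx mul1n big1 ?addn0 // => x /negbTE ->; by [].
Qed.

Section Swap.
Variables (n : nat) (f : boolfun n) (a b c d : bvec n).
Hypotheses (fa : f a) (fb : f b) (fc : ~~ f c) (fd : ~~ f d).
Hypothesis (hs : forall i, a i + b i = c i + d i).

Lemma swap_notchow : ~ chow f.
Proof.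
have ab : a != b.
  apply/eqP=> eab; subst b.
  have : c = a.
    apply/ffunP=> i; have := hs i.
    by case: (a i); case: (c i); case: (d i).
  by move=> ec; move: fc; rewrite ec fa.
have cd : c != d.
  apply/eqP=> ecd; subst d.
  have : a = c.
    apply/ffunP=> i; have := hs i.
    by case: (a i); case: (c i); case: (b i).
  by move=> ec; move: fc; rewrite -ec fa.
have ac : a != c by apply/eqP=> e; move: fc; rewrite -e fa.
have ad : a != d by apply/eqP=> e; move: fd; rewrite -e fa.
have bc : b != c by apply/eqP=> e; move: fc; rewrite -e fb.
have bd : b != d by apply/eqP=> e; move: fd; rewrite -e fb.
pose g : boolfun n := [ffun x => if (x == a) || (x == b) then false
   else if (x == c) || (x == d) then true else f x].
have key : forall W : bvec n -> nat, W a + W b = W c + W d ->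
   \sum_x (g x : nat) * W x = \sum_x (f x : nat) * W x.
  move=> W hW.
  have pt : forall x, (g x : nat) * W x + ((x == a) * W x + (x == b) * W x)
       = (f x : nat) * W x + ((x == c) * W x + (x == d) * W x).
    move=> x; rewrite /g ffunE.
    have ba : b != a by rewrite eq_sym.
    have ca : c != a by rewrite eq_sym.
    have da : d != a by rewrite eq_sym.
    have cb : c != b by rewrite eq_sym.
    have db : d != b by rewrite eq_sym.
    have dc : d != c by rewrite eq_sym.
    case: (eqVneq x a) => [->|xa]; last case: (eqVneq x b) => [->|xb];
      last case: (eqVneq x c) => [->|xc]; last case: (eqVneq x d) => [->|xd];
      by rewrite /= ?fa ?fb ?(negbTE fc) ?(negbTE fd) ?(negbTE ab) ?(negbTE ac) ?(negbTE ad) ?(negbTE bc) ?(negbTE bd) ?(negbTE cd)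
       ?(negbTE ba) ?(negbTE ca) ?(negbTE da) ?(negbTE cb) ?(negbTE db) ?(negbTE dc) ?addn0.
  have E : \sum_x ((g x : nat) * W x + ((x == a) * W x + (x == b) * W x))
       = \sum_x ((f x : nat) * W x + ((x == c) * W x + (x == d) * W x)).
    by apply: eq_bigr => x _; exact: pt.
  move: E; rewrite !big_split /= !sum_pt hW.
  by move/addIn.
move=> H; have e : g = f.
  apply: H.
  - move=> i; rewrite /chow_wi !cardS_sum.
    have E : forall F : boolfun n, \sum_x (F x && x i : nat) = \sum_x (F x : nat) * x i.
      by move=> F; apply: eq_bigr => x _; rewrite mulnb.
    by rewrite !E; apply: key; apply: hs.
  - rewrite /chow_w !cardS_sum.
    have E : forall F : boolfun n, \sum_x (F x : nat) = \sum_x (F x : nat) * 1.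
      by move=> F; apply: eq_bigr => x _; rewrite muln1.
    by rewrite !E; apply: key.
have := congr1 (fun h : boolfun n => h a) e.
by rewrite /= /g ffunE eqxx fa.
Qed.
End Swap.


Definition pt4 (l : seq bool) : bvec 4 := [ffun k : 'I_4 => nth false l k].
Definition PA := pt4 [:: true; false; true; false].
Definition PB := pt4 [:: false; true; false; true].
Definition PC := pt4 [:: true; true; false; false].
Definition PD := pt4 [:: false; false; true; true].

Lemma negvarsK s y : negvars s (negvars s y) = y.
Proof. by apply/ffunP=> k; rewrite !ffunE addbK. Qed.

Lemma restr_notchow n (f : boolfun n) (g : bvec 4 -> bool) :
  (g PA /\ g PB /\ ~~ g PC /\ ~~ g PD \/ g PC /\ g PD /\ ~~ g PA /\ ~~ g PB) ->
  has_restriction_to f g -> ~ chow f.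
Proof.
move=> hg [sigma [c [s [_ hf]]]].
pose X P := plug sigma c (negvars s P).
have fX : forall P, f (X P) = g P by move=> P; rewrite /X hf negvarsK.
have hs : forall i, X PA i + X PB i = X PC i + X PD i.
  move=> i; rewrite /X /plug !ffunE; case: pickP => [k _|_]; last by [].
  rewrite /negvars !ffunE.
  by case: k => [[|[|[|[|?]]]] ?] //=; case: (s _).
have hs' : forall i, X PC i + X PD i = X PA i + X PB i by move=> i; rewrite hs.
case: hg => [[a [b [cc d]]]|[a [b [cc d]]]].
- by apply: (swap_notchow (a := X PA) (b := X PB) (c := X PC) (d := X PD)); rewrite ?fX.
- by apply: (swap_notchow (a := X PC) (b := X PD) (c := X PA) (d := X PB)); rewrite ?fX.
Qed.

Lemma chow_NF n (f : boolfun n) : chow f -> no_forbidden_restriction f.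
Proof.
move=> hc; split => hr; apply: (restr_notchow _ hr) hc.
- by left; rewrite /g1 /PA /PB /PC /PD /pt4 !ffunE !inordK.
- by right; rewrite /g2 /PA /PB /PC /PD /pt4 !ffunE !inordK.
Qed.

Module AlgPart.
From mathcomp Require Import all_order all_algebra.
From mathcomp Require Import zify ring lra.
Import Order.TTheory GRing.Theory Num.Theory.
Local Open Scope ring_scope.

Definition Sw n (w : 'I_n -> int) (T : int) (x : bvec n) : int :=
  \sum_i w i * (x i : nat)%:Z - T.

Lemma sum_upd n (w : 'I_n -> int) (X : 'I_n -> int) i m : w i = 0 ->
  \sum_j (if j == i then m else w j) * X j = \sum_j w j * X j + m * X i.
Proof.
move=> wi; rewrite (bigD1 i) // [in RHS](bigD1 i) //= eqxx wi mul0r add0r addrC.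
congr (_ + _); apply: eq_bigr => j /negbTE ->; by [].
Qed.

Lemma Sw_bound n (w : 'I_n -> int) T x :
  `|Sw w T x| <= \sum_j `|w j| + `|T|.
Proof.
apply: le_trans (ler_normB _ _) _; apply: lerD => //.
apply: le_trans (ler_norm_sum _ _ _) _; apply: ler_sum => j _.
by rewrite normrM; case: (x j); rewrite ?mulr1 ?mulr0 ?normr0.
Qed.

Definition thr n (t : Defs.form n) w T :=
  (forall j, j \notin fvars t -> w j = 0) /\
  forall x, feval t x = (0 < Sw w T x) /\ Sw w T x != 0.

Lemma thr_step n (t : Defs.form n) w T i (op : bool -> bool -> bool) (m T' : int) :
  thr t w T -> i \notin fvars t ->
  (forall (b : bool) (s : int), `|s| <= \sum_j `|w j| + `|T| -> s != 0 ->
      op b (0 < s) = (0 < s + m * (b : nat)%:Z - (T' - T)) /\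
      s + m * (b : nat)%:Z - (T' - T) != 0) ->
  forall t', (forall x, feval t' x = op (x i) (feval t x)) ->
  {subset i :: fvars t <= fvars t'} ->
  thr t' (fun j => if j == i then m else w j) T'.
Proof.
move=> [w0 ht] it hop t' ht' sub; split.
  move=> j jt; case: eqP => [ej|_]; first by subst j; case/negP: jt; apply: sub; rewrite mem_head.
  apply: w0; apply: contra jt => jt; apply: sub; by rewrite inE jt orbT.
move=> x; have -> : Sw (fun j => if j == i then m else w j) T' x =
   Sw w T x + m * (x i : nat)%:Z - (T' - T).
  by rewrite /Sw sum_upd ?w0 //; ring.
rewrite ht'; have [-> nz] := ht x.
by apply: hop => //; apply: Sw_bound.
Qed.

Lemma bnd_split (s B : int) : `|s| <= B -> -B <= s <= B.
Proof. by rewrite ler_norml. Qed.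

Lemma thr_or n (t : Defs.form n) w T i : thr t w T -> i \notin fvars t ->
  forall t', (forall x, feval t' x = (x i) || feval t x) ->
  {subset i :: fvars t <= fvars t'} -> exists w' T', thr t' w' T'.
Proof.
move=> ht it t' e sub; eexists; eexists.
apply: (thr_step (m := \sum_j `|w j| + `|T| + 1) (T' := T) ht it _ e sub).
move=> b s /bnd_split /andP[s1 s2] s0; case: b => /=; split;
  rewrite ?mulr1; move: s1 s2 s0; move: (\sum_j `|w j|) => B; move: `|T| => U.
- move=> *; apply/esym; lia.
- move=> *; lia.
- move=> *; lia.
- move=> *; lia.
Qed.

Lemma thr_and n (t : Defs.form n) w T i : thr t w T -> i \notin fvars t ->
  forall t', (forall x, feval t' x = (x i) && feval t x) ->
  {subset i :: fvars t <= fvars t'} -> exists w' T', thr t' w' T'.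
Proof.
move=> ht it t' e sub; eexists; eexists.
apply: (thr_step (m := \sum_j `|w j| + `|T| + 1) (T' := T + (\sum_j `|w j| + `|T| + 1)) ht it _ e sub).
move=> b s /bnd_split /andP[s1 s2] s0; case: b => /=; split;
  rewrite ?mulr1; move: s1 s2 s0; move: (\sum_j `|w j|) => B; move: `|T| => U;
  move=> *; lia.
Qed.

Lemma thr_nor n (t : Defs.form n) w T i : thr t w T -> i \notin fvars t ->
  forall t', (forall x, feval t' x = ~~ (x i) || feval t x) ->
  {subset i :: fvars t <= fvars t'} -> exists w' T', thr t' w' T'.
Proof.
move=> ht it t' e sub; eexists; eexists.
apply: (thr_step (op := fun b s => ~~ b || s) (m := - (\sum_j `|w j| + `|T| + 1)) (T' := T - (\sum_j `|w j| + `|T| + 1)) ht it _ e sub).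
move=> b s /bnd_split /andP[s1 s2] s0; case: b => /=; split;
  rewrite ?mulr1; move: s1 s2 s0; move: (\sum_j `|w j|) => B; move: `|T| => U;
  move=> *; lia.
Qed.

Lemma thr_nand n (t : Defs.form n) w T i : thr t w T -> i \notin fvars t ->
  forall t', (forall x, feval t' x = ~~ (x i) && feval t x) ->
  {subset i :: fvars t <= fvars t'} -> exists w' T', thr t' w' T'.
Proof.
move=> ht it t' e sub; eexists; eexists.
apply: (thr_step (op := fun b s => ~~ b && s) (m := - (\sum_j `|w j| + `|T| + 1)) (T' := T) ht it _ e sub).
move=> b s /bnd_split /andP[s1 s2] s0; case: b => /=; split;
  rewrite ?mulr1; move: s1 s2 s0; move: (\sum_j `|w j|) => B; move: `|T| => U;
  move=> *; lia.
Qed.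

Lemma thr_const n (b : bool) : exists w T, thr (@FConst n b) w T.
Proof.
exists (fun _ => 0), (if b then -1 else 1); split => // x.
rewrite /Sw big1 ?add0r /=; last by move=> *; rewrite mul0r.
by case: b.
Qed.

Lemma nested_thr n (t : Defs.form n) : nested t -> exists w T, thr t w T.
Proof.
elim=> {t}.
- move=> i; have [w [T h]] := thr_const n false.
  apply: (thr_or h) => //= [x|j]; by rewrite ?orbF //=.
- move=> i; have [w [T h]] := thr_const n true.
  apply: (thr_nand h) => //= [x|j]; by rewrite ?andbT //=.
- move=> i t _ [w [T h]] it; by apply: (thr_or h it).
- move=> i t _ [w [T h]] it; by apply: (thr_and h it).
- move=> i t _ [w [T h]] it; by apply: (thr_nor h it).
- move=> i t _ [w [T h]] it; by apply: (thr_nand h it).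
Qed.


Lemma Posz_sum (I : finType) (F : I -> nat) : (\sum_i F i)%N%:Z = \sum_i (F i)%:Z.
Proof. exact: (big_morph Posz PoszD erefl). Qed.

Lemma chow_sum n (f : boolfun n) (w : 'I_n -> int) T :
  \sum_x (f x : nat)%:Z * Sw w T x =
  \sum_i w i * (chow_wi f i)%:Z - T * (chow_w f)%:Z.
Proof.
rewrite /chow_wi /chow_w (cardS_sum (fun x => f x)) Posz_sum.
under [in RHS]eq_bigr => i _ do rewrite (cardS_sum (fun x => f x && x i)) Posz_sum.
rewrite /Sw.
rewrite (eq_bigr (fun x => \sum_i (f x : nat)%:Z * (w i * (x i : nat)%:Z) - (f x : nat)%:Z * T)); last first.
  by move=> x _; rewrite mulrBr mulr_sumr.
rewrite sumrB exchange_big /= mulr_sumr; congr (_ - _).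
  apply: eq_bigr => i _; rewrite mulr_sumr; apply: eq_bigr => x _.
  by case: (f x); case: (x i); rewrite /= ?mulr1 ?mulr0 ?mul1r ?mul0r.
by apply: eq_bigr => x _; rewrite mulrC.
Qed.

Lemma thr_chow n (f : boolfun n) (t : Defs.form n) w T :
  thr t w T -> represents t f -> chow f.
Proof.
move=> [_ ht] rf g hwi hw.
have E : \sum_x (((f x : nat)%:Z - (g x : nat)%:Z) * Sw w T x) = 0.
  under eq_bigr do rewrite mulrBl.
  rewrite sumrB !chow_sum.
  have -> : \sum_i w i * (chow_wi g i)%:Z = \sum_i w i * (chow_wi f i)%:Z.
    by apply: eq_bigr => i _; rewrite hwi.
  by rewrite hw subrr.
have nn : forall x, 0 <= ((f x : nat)%:Z - (g x : nat)%:Z) * Sw w T x.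
  move=> x; have [e nz] := ht x; rewrite rf e.
  case: (g x); case: ltrP => h //=; rewrite ?subrr ?mul0r //.
  - move: h; lia.
  - move: h; lia.
apply/esym/ffunP => x.
have := psumr_eq0P (fun x _ => nn x) E (i := x) isT.
move/eqP; rewrite mulf_eq0 => /orP[|]; last by have [_ /negbTE ->] := ht x.
by rewrite subr_eq0; case: (f x); case: (g x).
Qed.

Lemma lro_chow n (f : boolfun n) : linear_read_once f -> chow f.
Proof.
case=> [[b hb]|[t [nt rt]]].
- have [w [T h]] := thr_const n b.
  by apply: (thr_chow h) => x; rewrite hb.
- have [w [T h]] := nested_thr nt.
  exact: (thr_chow h).
Qed.

End AlgPart.

Theorem mainTheorem15 (n : nat) (f : boolfun n) :
  read_once f ->
  (linear_read_once f <-> chow f) /\ (chow f <-> no_forbidden_restriction f).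
Proof.
move=> ro; split; split.
- exact: AlgPart.lro_chow.
- by move=> c; apply: NF_lro => //; apply: chow_NF.
- exact: chow_NF.
- by move=> nf; apply: AlgPart.lro_chow; apply: NF_lro.
Qed.
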